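(* Let $\mathcal{M}$ be a connected simplicial $2$-manifold (possibly with boundary) that is not a checkered polygon triangulation. Then $\mathcal{M}$ has a topological unfolding that is not checkered.
   Context: A simplicial $2$-manifold is a finite $2$-dimensional simplicial complex homeomorphic to a $2$-manifold, possibly with boundary; its triangles are called facets. The weak dual $\mathcal{M}^*$ is the graph with a node for each facet and an arc between two facets sharing an edge (for a simplicial complex this is a simple graph). For a spanning tree $T^*$ of $\mathcal{M}^*$, the topological unfolding determined by $T^*$ is the complex obtained from disjoint copies of the facets of $\mathcal{M}$ by gluing two facets along their common edge exactly when they are joined by an arc of $T^*$; it is a triangulated polygon with no interior vertices (a complex homeomorphic to a closed disk with all vertices on the boundary). A polygon triangulation (triangulated polygon with no interior vertices) is checkered if there is a coloring of its triangles black and white such that triangles sharing an edge receive different colors and every white triangle shares an edge with exactly three triangles. *)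

(* Defs.v *)
From mathcomp Require Import all_boot.
Set Implicit Arguments. Unset Strict Implicit. Unset Printing Implicit Defensive.

Section Defs.
Variable V : finType.

(* A pure 2-dimensional simplicial complex is given by its set F of facets
   (triangles = 3-element sets of vertices); the complex is the downward closure. *)

Definition verts (F : {set {set V}}) : {set V} := \bigcup_(f in F) f.

Definition edges (F : {set {set V}}) : {set {set V}} :=
  [set e : {set V} | (#|e| == 2) && [exists f in F, e \subset f]].

Definition facet_deg (F : {set {set V}}) (e : {set V}) : nat :=
  #|[set f in F | e \subset f]|.

Definition boundary_edge (F : {set {set V}}) (e : {set V}) : bool :=
  (e \in edges F) && (facet_deg F e == 1).

Definition link_verts (F : {set {set V}}) (v : V) : {set V} :=
  [set x | (x != v) && [exists f in F, (v \in f) && (x \in f)]].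
Definition link_rel (F : {set {set V}}) (v : V) : rel V :=
  fun x y => [set v; x; y] \in F.

(* Combinatorial simplicial 2-manifold (possibly with boundary):
   nonempty, pure 2-dimensional, every edge in at most two triangles,
   and the link of every vertex is connected (hence a path or a cycle). *)
Definition simplicial_2manifold (F : {set {set V}}) : Prop :=
  [/\ F != set0,
      (forall f, f \in F -> #|f| = 3),
      (forall e : {set V}, #|e| = 2 -> facet_deg F e <= 2)
    & (forall v x y, x \in link_verts F v -> y \in link_verts F v ->
          connect (link_rel F v) x y)].

(* topological connectedness = connectedness of the 1-skeleton *)
Definition sc_connected (F : {set {set V}}) : Prop :=
  forall u w, u \in verts F -> w \in verts F ->
    connect (fun x y => [exists f in F, (x \in f) && (y \in f)]) u w.

(* Triangulated polygon with no interior vertices: a connected simplicial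
   2-manifold homeomorphic to a closed disk (Euler characteristic 1, with
   nonempty boundary; by the classification of surfaces) with every vertex on
   the boundary. *)
Definition polygon_triangulation (F : {set {set V}}) : Prop :=
  [/\ simplicial_2manifold F, sc_connected F,
      (forall v, v \in verts F ->
          exists2 e, boundary_edge F e & v \in e)
    & #|verts F| + #|F| = #|edges F| + 1].

(* adjacency of facets in M (sharing an edge) = arcs of the weak dual M^* *)
Definition adjM (F : {set {set V}}) : rel {set V} :=
  fun f g => (f != g) && (#|f :&: g| == 2).

Definition spanning_tree (F : {set {set V}}) (T : {set {set {set V}}}) : Prop :=
  [/\ (forall A, A \in T ->
         exists f g, [/\ f \in F, g \in F, adjM F f g & A = [set f; g]]),
      (forall f g, f \in F -> g \in F ->
         connect (fun x y => [set x; y] \in T) f g)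
    & #|T| = #|F| - 1].

(* Topological unfolding along T: disjoint copies of the facets (the copy of
   facet f is tagged by f); the copy-edge (f,e) (e a 2-subset of f) is glued to
   the copy-edge (g,e) when {f,g} is an arc of T and e lies in both.  Edge
   classes of the unfolding = equivalence classes of this gluing. *)
Definition glue (T : {set {set {set V}}}) : rel ({set V} * {set V}) :=
  fun p q => [&& p.2 == q.2, [set p.1; q.1] \in T,
                 p.2 \subset p.1 & p.2 \subset q.1].

Definition unf_share (T : {set {set {set V}}}) : rel {set V} :=
  fun f g => (f != g) &&
    [exists e1 : {set V}, exists e2 : {set V},
      [&& #|e1| == 2, #|e2| == 2, e1 \subset f, e2 \subset g &
          connect (glue T) (f, e1) (g, e2)]].

(* checkered w.r.t. the edge-sharing relation adj on the triangles F:
   a black/white colouring (true = white) such that triangles sharing an edge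
   get different colours and every white triangle shares an edge with exactly
   three triangles. *)
Definition checkered (F : {set {set V}}) (adj : rel {set V}) : Prop :=
  exists c : {set V} -> bool,
    (forall f g, f \in F -> g \in F -> adj f g -> c f != c g) /\
    (forall f, f \in F -> c f -> #|[set g in F | adj f g]| = 3).

End Defs.

(* Main.v *)
Require Import Defs.
From mathcomp Require Import all_boot zify.
From Stdlib Require Import Classical.
Set Implicit Arguments. Unset Strict Implicit. Unset Printing Implicit Defensive.


Lemma connect_inv (T : finType) (e : rel T) (P : T -> Prop) x y :
  P x -> (forall a b, P a -> e a b -> P b) -> connect e x y -> P y.
Proof.
move=> Px step /connectP[p pth ->]; elim: p x Px pth => [|z p IH] x Px //= /andP[exz pth].
exact: IH (step _ _ Px exz) pth.
Qed.

Lemma connect_cross (T : finType) (e : rel T) (S : {set T}) x y :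
  connect e x y -> x \in S -> y \notin S ->
  exists a b, [/\ a \in S, b \notin S & e a b].
Proof.
move=> /connectP[p pth ->]; elim: p x pth => [|z p IH] x /=; first by move=> _ ->.
case/andP=> exz pth xS nS; case: (boolP (z \in S)) => zS.
- exact: IH pth zS nS.
- by exists x, z.
Qed.

Lemma grow (T : finType) (X : {set T}) (R : rel T) (P : {set T} -> Prop) x0 :
  x0 \in X ->
  (forall y, y \in X -> connect R x0 y) ->
  (forall a b, a \in X -> R a b -> b \in X) ->
  P [set x0] ->
  (forall (S : {set T}) a b, S \subset X -> x0 \in S -> a \in S -> b \in X -> b \notin S ->
      R a b -> P S -> P (b |: S)) ->
  P X.
Proof.
move=> x0X conn closed P0 step.
suff H: forall n S, #|X :\: S| = n -> S \subset X -> x0 \in S -> P S -> P X.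
  by apply: (H _ [set x0] erefl); rewrite ?sub1set ?set11.
elim=> [|n IH] S hn SX x0S PS.
- have -> : X = S; last by [].
  apply/eqP; rewrite eqEsubset SX andbT.
  by rewrite -setD_eq0 -cards_eq0 hn.
- have : X :\: S != set0 by rewrite -cards_eq0 hn.
  case/set0Pn=> y; rewrite inE => /andP[yS yX].
  have [a [b [aS bS Rab]]] := connect_cross (conn y yX) x0S yS.
  have aX : a \in X by apply: (subsetP SX).
  have bX := closed a b aX Rab.
  apply: (IH (b |: S)).
  + have E : X :\: (b |: S) = (X :\: S) :\ b.
      by apply/setP=> z; rewrite !inE; case: (z == b); rewrite ?andbF ?andbT.
    move: hn; rewrite (cardsD1 b) inE bS bX /= add1n => -[<-].
    by rewrite E.
  + by rewrite subUset sub1set bX SX.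
  + by rewrite inE x0S orbT.
  + exact: step SX x0S aS bX bS Rab PS.
Qed.


Section Basic.
Variable V : finType.
Variable F : {set {set V}}.
Hypothesis HF3 : forall f, f \in F -> #|f| = 3.
Hypothesis Hdeg : forall e : {set V}, #|e| = 2 -> facet_deg F e <= 2.

Lemma inter_le2 f g : f \in F -> g \in F -> f != g -> #|f :&: g| <= 2.
Proof.
move=> fF gF nfg; rewrite leqNgt; apply/negP => H.
have H1 : #|f :&: g| = #|f|.
  apply/eqP; rewrite eqn_leq subset_leq_card ?subsetIl //= HF3 //.
have H2 : #|f :&: g| = #|g|.
  apply/eqP; rewrite eqn_leq subset_leq_card ?subsetIr //= HF3 //.
have e1 : f :&: g = f by apply/eqP; rewrite eqEcard subsetIl H1 leqnn.
have e2 : f :&: g = g by apply/eqP; rewrite eqEcard subsetIr H2 leqnn.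
by move: nfg; rewrite -e1 e2 eqxx.
Qed.

Lemma share2 f g a b : f \in F -> g \in F -> a != b ->
  a \in f -> b \in f -> a \in g -> b \in g -> f = g \/ adjM F f g.
Proof.
move=> fF gF nab af bf ag bg; case: (eqVneq f g) => [->|nfg]; first by left.
right; rewrite /adjM nfg /= eqn_leq inter_le2 //=.
have : [set a; b] \subset f :&: g by rewrite subUset !sub1set !inE af bf ag bg.
by move/subset_leq_card; rewrite cards2 nab.
Qed.

Lemma no_three (e : {set V}) f g h : #|e| = 2 -> f \in F -> g \in F -> h \in F ->
  e \subset f -> e \subset g -> e \subset h -> f != g -> g != h -> f != h -> False.
Proof.
move=> e2 fF gF hF ef eg eh nfg ngh nfh.
have := Hdeg e2; rewrite /facet_deg.
have : [set f; g; h] \subset [set x in F | e \subset x].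
  by rewrite !subUset !sub1set !inE fF gF hF ef eg eh.
move/subset_leq_card => H1 H2.
have := leq_trans H1 H2.
rewrite setUC cardsU1 cards2 !inE negb_or eq_sym nfh eq_sym ngh nfg //.
Qed.

Definition Dual : rel {set V} := fun f g => [&& f \in F, g \in F & adjM F f g].

Lemma adjM_sym : symmetric (adjM F).
Proof. by move=> f g; rewrite /adjM eq_sym setIC. Qed.

Lemma Dual_sym : symmetric Dual.
Proof. by move=> f g; rewrite /Dual adjM_sym andbCA. Qed.

End Basic.


Lemma distinct3 (V : finType) (x y z : V) : #|[set x; y; z]| = 3 ->
  [/\ x != y, y != z & x != z].
Proof.
rewrite setUC cardsU1 cards2 !inE negb_or => H.
have : [&& x != y, z != x & z != y].
  by move: H; case: (x != y); case: (z != x); case: (z != y).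
by case/and3P=> a b c; split; rewrite // eq_sym.
Qed.

Section Conn.
Variable V : finType.
Variable F : {set {set V}}.
Hypothesis HF3 : forall f, f \in F -> #|f| = 3.
Hypothesis Hdeg : forall e : {set V}, #|e| = 2 -> facet_deg F e <= 2.
Hypothesis Hlink : forall v x y, x \in link_verts F v -> y \in link_verts F v ->
          connect (link_rel F v) x y.

Definition Rv v : rel {set V} := fun f g => Dual F f g && (v \in g).

Lemma share2_conn v f g a : f \in F -> g \in F -> a != v ->
  v \in f -> a \in f -> v \in g -> a \in g -> connect (Rv v) f g.
Proof.
move=> fF gF nav vf af vg ag.
case: (share2 HF3 fF gF nav af vf ag vg) => [->|adj]; first exact: connect0.
by apply: connect1; rewrite /Rv /Dual fF gF adj vg.
Qed.

Lemma other_vert (f : {set V}) v : #|f| = 3 -> exists2 x, x \in f & x != v.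
Proof.
move=> f3; have : f :\ v != set0.
  by rewrite -cards_eq0 -(eqn_add2l (v \in f)) -cardsD1 f3; case: (v \in f).
by case/set0Pn=> x; rewrite !inE => /andP[]; exists x.
Qed.

Lemma star_conn v f g : f \in F -> g \in F -> v \in f -> v \in g ->
  connect (Rv v) f g.
Proof.
move=> fF gF vf vg.
have [x xf xv] := other_vert v (HF3 fF).
have [y yg yv] := other_vert v (HF3 gF).
have lx : x \in link_verts F v.
  by rewrite inE xv /=; apply/existsP; exists f; rewrite fF vf xf.
have ly : y \in link_verts F v.
  by rewrite inE yv /=; apply/existsP; exists g; rewrite gF vg yg.
pose P z := z != v /\ forall h, h \in F -> v \in h -> z \in h -> connect (Rv v) f h.
have : P y.
  apply: (connect_inv (e := link_rel F v) _ _ (Hlink lx ly)).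
  - by split=> // h hF vh xh; apply: share2_conn xv vf xf vh xh.
  - move=> a b [av Pa] lab.
    have m3 := HF3 lab.
    have [nva nab nvb] := distinct3 m3.
    split; first by rewrite eq_sym.
    move=> h hF vh bh.
    apply: connect_trans (Pa _ lab _ _) _; rewrite ?inE ?eqxx ?orbT //.
    have nbv : b != v by rewrite eq_sym.
    by apply: (share2_conn _ hF nbv) => //; rewrite ?inE ?eqxx ?orbT.
by case=> _; apply.
Qed.

End Conn.

Section Conn2.
Variable V : finType.
Variable F : {set {set V}}.
Hypothesis HF3 : forall f, f \in F -> #|f| = 3.
Hypothesis Hdeg : forall e : {set V}, #|e| = 2 -> facet_deg F e <= 2.
Hypothesis Hlink : forall v x y, x \in link_verts F v -> y \in link_verts F v ->
          connect (link_rel F v) x y.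
Hypothesis Hsc : sc_connected F.

Lemma Rv_Dual v : subrel (connect (Rv F v)) (connect (Dual F)).
Proof.
apply: connect_sub => x y /andP[d _]; exact: connect1.
Qed.

Lemma in_verts f x : f \in F -> x \in f -> x \in verts F.
Proof. by move=> fF xf; apply/bigcupP; exists f. Qed.

Lemma some_vert f : f \in F -> exists x, x \in f.
Proof. by move=> fF; apply/set0Pn; rewrite -cards_eq0 HF3. Qed.

Lemma dual_conn f g : f \in F -> g \in F -> connect (Dual F) f g.
Proof.
move=> fF gF.
have [u uf] := some_vert fF; have [w wg] := some_vert gF.
pose P z := forall h, h \in F -> z \in h -> connect (Dual F) f h.
suff : P w by apply.
apply: (connect_inv (P := P) _ _ (Hsc (in_verts fF uf) (in_verts gF wg))).
- by move=> h hF uh; exact: (Rv_Dual (star_conn HF3 Hlink fF hF uf uh)).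
- move=> a b Pa /existsP[m /and3P[mF am bm]] h hF bh.
  apply: connect_trans (Pa _ mF am) _.
  exact: (Rv_Dual (star_conn HF3 Hlink mF hF bm bh)).
Qed.

End Conn2.


Lemma pair_eqS (T : finType) (x y a b : T) : [set x; y] = [set a; b] -> a != b ->
  (x = a /\ y = b) \/ (x = b /\ y = a).
Proof.
move=> E nab.
have xi : x \in [set a; b] by rewrite -E !inE eqxx.
have yi : y \in [set a; b] by rewrite -E !inE eqxx orbT.
have ai : a \in [set x; y] by rewrite E !inE eqxx.
have bi : b \in [set x; y] by rewrite E !inE eqxx orbT.
move: xi ai bi; rewrite !inE => /orP[/eqP xe|/eqP xe] ai bi; subst x.
- move: bi; rewrite eq_sym (negbTE nab) /= => /eqP ->; by left.
- move: ai; rewrite (negbTE nab) /= => /eqP ->; by right.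
Qed.

Definition Tadj (V : finType) (T : {set {set {set V}}}) : rel {set V} :=
  fun f g => [set f; g] \in T.

Lemma Tadj_sym (V : finType) (T : {set {set {set V}}}) : symmetric (Tadj T).
Proof. by move=> f g; rewrite /Tadj setUC. Qed.

Section Tree.
Variable V : finType.
Variable F : {set {set V}}.

Definition valid (H : rel {set V}) (r : {set V}) (p : {set V} -> {set V})
  (rk : {set V} -> nat) (S : {set {set V}}) :=
  p r = r /\ forall f, f \in S -> f != r -> [/\ p f \in S, H f (p f) & rk (p f) < rk f].

Lemma build (H : rel {set V}) r : r \in F ->
  (forall y, y \in F -> connect H r y) ->
  (forall a b, a \in F -> H a b -> b \in F) -> symmetric H ->
  exists p rk, valid H r p rk F.
Proof.
move=> rF conn clos Hsym.
apply: (grow (P := fun S => exists p rk, valid H r p rk S) rF conn clos).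
  by exists id, (fun _ => 0); split=> // f; rewrite inE => /eqP ->; rewrite eqxx.
move=> S a b SF rS aS bF bS Hab [p [rk [pr Hv]]].
exists (fun z => if z == b then a else p z), (fun z => if z == b then (rk a).+1 else rk z).
have rb : r != b by apply: contraNneq bS => <-.
split; first by rewrite (negbTE rb).
move=> f; rewrite !inE => /orP[/eqP ->|fS] fr.
  have ab : a != b by apply: contraNneq bS => <-.
  by rewrite eqxx (negbTE ab) aS -Hsym Hab leqnn.
have fb : f != b by apply: contraNneq bS => <-.
have [pS Hf rkf] := Hv f fS fr.
have pb : p f != b by apply: contraNneq bS => <-.
by rewrite (negbTE fb) (negbTE pb) pS orbT Hf rkf.
Qed.

Definition TreeOf (p : {set V} -> {set V}) (r : {set V}) : {set {set {set V}}} :=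
  [set [set f; p f] | f in F :\ r].

Variables (H : rel {set V}) (r : {set V}) (p : {set V} -> {set V}) (rk : {set V} -> nat).
Hypothesis Hv : valid H r p rk F.
Hypothesis rF : r \in F.

Lemma p_neq f : f \in F -> f != r -> p f != f.
Proof.
move=> fF fr; have [_ _ h] := Hv.2 f fF fr.
by apply/eqP => e; move: h; rewrite e ltnn.
Qed.

Lemma pF f : f \in F -> p f \in F.
Proof.
move=> fF; case: (eqVneq f r) => [->|fr]; first by rewrite Hv.1.
by have [] := Hv.2 f fF fr.
Qed.

Lemma Tadj_tree x y : Tadj (TreeOf p r) x y ->
  (x \in F /\ x != r /\ y = p x) \/ (y \in F /\ y != r /\ x = p y).
Proof.
case/imsetP=> z; rewrite !inE => /andP[zr zF] E.
have := pair_eqS E; rewrite eq_sym p_neq // => /(_ isT) [[-> ->]|[-> ->]].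
  by left.
by right.
Qed.

Lemma Tadj_p f : f \in F -> f != r -> Tadj (TreeOf p r) f (p f).
Proof. by move=> fF fr; apply/imsetP; exists f; rewrite // !inE fr fF. Qed.

Lemma conn_root f : f \in F -> connect (Tadj (TreeOf p r)) f r.
Proof.
move: {2}(rk f) (leqnn (rk f)) => n; elim: n f => [|n IH] f hf fF;
  case: (eqVneq f r) => [->|fr]; rewrite ?connect0 //.
- by have [_ _] := Hv.2 f fF fr; rewrite leqn0 in hf; rewrite (eqP hf).
- apply: connect_trans (connect1 (Tadj_p fF fr)) _.
  have [pS _ h] := Hv.2 f fF fr.
  by apply: IH pS; rewrite -ltnS; apply: leq_trans h hf.
Qed.

Lemma tree_spanning : (forall f g, f \in F -> H f g -> adjM F f g) ->
  spanning_tree F (TreeOf p r).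
Proof.
move=> Hadj; split.
- move=> A /imsetP[f]; rewrite !inE => /andP[fr fF] ->.
  have [pS Hf _] := Hv.2 f fF fr.
  by exists f, (p f); split=> //; apply: Hadj.
- move=> f g fF gF; apply: connect_trans (conn_root fF) _.
  by rewrite (sym_connect_sym (@Tadj_sym V _)) conn_root.
- rewrite card_in_imset; first by rewrite (cardsD1 r F) rF add1n subn1.
  move=> f g; rewrite !inE => /andP[fr fF] /andP[gr gF] E.
  have ng : g != p g by rewrite eq_sym p_neq.
  case: (pair_eqS E ng) => [[]//|[fe ge]].
  have [_ _ h1] := Hv.2 f fF fr; have [_ _ h2] := Hv.2 g gF gr.
  by move: h1 h2; rewrite -fe -ge => h1 h2; have := ltn_trans h1 h2; rewrite ltnn.
Qed.

End Tree.


Lemma checkered_ext (V : finType) (F : {set {set V}}) (a1 a2 : rel {set V}) :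
  (forall f g, f \in F -> g \in F -> a1 f g = a2 f g) ->
  checkered F a1 -> checkered F a2.
Proof.
move=> E [c [H1 H2]]; exists c; split.
- by move=> f g fF gF; rewrite -E //; apply: H1.
- move=> f fF cf; rewrite -(H2 f fF cf); apply: eq_card => g.
  by rewrite !inE; case gF: (g \in F) => //=; rewrite E.
Qed.

Section Unf.
Variable V : finType.
Variable F : {set {set V}}.
Hypothesis HF3 : forall f, f \in F -> #|f| = 3.
Hypothesis Hdeg : forall e : {set V}, #|e| = 2 -> facet_deg F e <= 2.
Variable T : {set {set {set V}}}.
Hypothesis HT : forall A, A \in T ->
  exists f g, [/\ f \in F, g \in F, adjM F f g & A = [set f; g]].

Lemma arc_facts x y : [set x; y] \in T -> [/\ x \in F, y \in F, x != y & adjM F x y].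
Proof.
move=> /HT[f [g [fF gF adj E]]].
have nfg : f != g by case/andP: adj.
case: (pair_eqS E nfg) => [[-> ->]|[-> ->]].
  by split=> //.
by rewrite adjM_sym; split=> //; rewrite eq_sym.
Qed.

Lemma unf_Tadj f g : f \in F -> unf_share T f g = Tadj T f g.
Proof.
move=> fF; apply/idP/idP.
- case/andP=> nfg /existsP[e1 /existsP[e2 /and5P[e12 e22 e1f e2g cn]]].
  pose P (q : {set V} * {set V}) := q.2 = e1 /\ (q.1 = f \/ [set f; q.1] \in T).
  have : P (g, e2).
    apply: (connect_inv (P := P) _ _ cn); first by split=> //; left.
    move=> [p1 p2] [q1 q2] [/= pe Pp] /and4P[/= /eqP pq Tpq sp1 sq1].
    split; first by rewrite -pq.
    have [p1F q1F npq _] := arc_facts Tpq.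
    case: Pp => [pf|Tfp]; first by right; rewrite -pf.
    have [_ _ nfp _] := arc_facts Tfp.
    case: (eqVneq q1 f) => [->|nqf]; first by left.
    have nfq : f != q1 by rewrite eq_sym.
    exfalso; apply: (no_three Hdeg (eqP e12) fF p1F q1F e1f _ _ nfp npq nfq).
    + by rewrite -pe.
    + by rewrite -pe.
  case=> /= _ [gf|//]; by rewrite gf eqxx in nfg.
- move=> Tfg; have [_ gF nfg adj] := arc_facts Tfg.
  rewrite /unf_share nfg /=; apply/existsP; exists (f :&: g); apply/existsP; exists (f :&: g).
  case/andP: adj => _ ->; rewrite subsetIl subsetIr /=.
  have Tfg1 : [set f; g] \in T := Tfg.
  by apply: connect1; rewrite /glue /= eqxx subsetIl subsetIr Tfg1.
Qed.

Lemma unf_checkered : checkered F (unf_share T) <-> checkered F (Tadj T).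
Proof.
split; apply: checkered_ext => f g fF gF; by rewrite unf_Tadj.
Qed.

End Unf.

Section Deg.
Variable V : finType.
Variable F : {set {set V}}.
Hypothesis HF3 : forall f, f \in F -> #|f| = 3.
Hypothesis Hdeg : forall e : {set V}, #|e| = 2 -> facet_deg F e <= 2.

Definition nbrs (f : {set V}) := [set g in F | adjM F f g].

Lemma nbrs_le3 f : f \in F -> #|nbrs f| <= 3.
Proof.
move=> fF.
have <- : 'C(3, 2) = 3 by [].
rewrite -(HF3 fF) -cards_draws -(@card_in_imset _ _ (fun g => f :&: g) (nbrs f)).
  apply: subset_leq_card; apply/subsetP => e /imsetP[g]; rewrite !inE => /andP[gF adj] ->.
  by case/andP: adj => _ ->; rewrite subsetIl.
move=> g h; rewrite !inE => /andP[gF /andP[nfg /eqP c2]] /andP[hF /andP[nfh _]] E.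
apply/eqP; apply/negP => ngh.
apply: (no_three Hdeg c2 fF gF hF (subsetIl _ _) (subsetIr _ _)) => //.
  by rewrite E subsetIr.
by apply/negP.
Qed.

End Deg.


Lemma measure_ind (T : Type) (m : T -> nat) (P : T -> Prop) :
  (forall x, (forall y, m y < m x -> P y) -> P x) -> forall x, P x.
Proof.
move=> H x; move: {2}(m x) (leqnn (m x)) => n; elim: n x => [|n IH] x hx; apply: H => y hy.
  by move: (leq_trans hy hx).
by apply: IH; rewrite -ltnS; apply: leq_trans hy hx.
Qed.

Section Exch.
Variable V : finType.
Variable F : {set {set V}}.
Hypothesis HF3 : forall f, f \in F -> #|f| = 3.
Hypothesis Hdeg : forall e : {set V}, #|e| = 2 -> facet_deg F e <= 2.
Variable T0 : {set {set {set V}}}.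
Hypothesis HT0 : spanning_tree F T0.
Variables a b : {set V}.
Hypotheses (aF : a \in F) (bF : b \in F) (adjab : adjM F a b) (abT0 : [set a; b] \notin T0).

Let H := Tadj T0.

Lemma HT0arc x y : H x y -> [/\ x \in F, y \in F, x != y & adjM F x y].
Proof. by case: HT0 => h _ _; apply: (arc_facts h). Qed.

Lemma exch_main : exists T, spanning_tree F T /\ ~ checkered F (Tadj T).
Proof.
have [p [rk Hv]] : exists p rk, valid H a p rk F.
  apply: (@build V F H a aF).
  - by case: HT0 => _ h _ y yF; apply: h.
  - by move=> x y _ /HT0arc [].
  - exact: Tadj_sym.
pose T := TreeOf F p a.
have HT : spanning_tree F T.
  by apply: (tree_spanning Hv aF) => f g _ /HT0arc [].
have Hv1 := Hv.1; have Hv2 := Hv.2.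
have TT0 x y : Tadj T x y -> H x y.
  case/(Tadj_tree Hv) => [[xF [xa ->]]|[yF [ya ->]]].
    by have [] := Hv2 x xF xa.
  by rewrite /H Tadj_sym; have [] := Hv2 y yF ya.
have Tarc x y : Tadj T x y -> [/\ x \in F, y \in F, x != y & adjM F x y].
  by move/TT0/HT0arc.
have abT : ~~ Tadj T a b by apply/negP => /TT0; apply/negP.
case: (classic (checkered F (Tadj T))) => [[c [cP cW]]|nchk]; last by exists T.
have c_false x : x \in F -> #|[set y in F | Tadj T x y]| <= 2 -> c x = false.
  move=> xF h; apply/negP => cx; by move: h; rewrite cW.
have Tn_sub x : [set y in F | Tadj T x y] \subset nbrs F x.
  by apply/subsetP => y; rewrite !inE => /andP[yF /Tarc[_ _ _ ->]]; rewrite yF.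
have ca : c a = false.
  apply: (c_false a aF).
  have : [set y in F | Tadj T a y] \subset nbrs F a :\ b.
    apply/subsetP => y; rewrite !inE => /andP[yF Tay].
    have [_ _ _ adj] := Tarc _ _ Tay.
    rewrite yF adj !andbT; apply/eqP => yb; move: abT; rewrite -yb => /negP; exact.
  move/subset_leq_card; move/leq_trans; apply.
  have := nbrs_le3 HF3 Hdeg aF; rewrite (cardsD1 b (nbrs F a)) !inE bF adjab /=.
  by rewrite add1n ltnS.
have rk_step x : x \in F -> x != a -> rk (p x) < rk x.
  by move=> xF xa; have [] := Hv2 x xF xa.
have pF x : x \in F -> p x \in F.
  move=> xF; case: (eqVneq x a) => [->|xa]; first by rewrite Hv1.
  by have [] := Hv2 x xF xa.
have fc_inv x y : x \in F -> fconnect p x y -> y \in F /\ (y = x \/ rk y < rk x).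
  move=> xF; apply: (connect_inv (P := fun y => y \in F /\ (y = x \/ rk y < rk x))); first by split=> //; left.
  move=> u w [uF hu] /eqP <-; split; first exact: pF.
  case: (eqVneq u a) => [ua|ua]; first by rewrite ua Hv1 -ua.
  right; case: hu => [<-|h]; first exact: rk_step.
  exact: ltn_trans (rk_step _ uF ua) h.
have fc_a y : fconnect p a y -> y = a.
  by apply: (connect_inv (P := fun y => y = a)) => // u w -> /eqP <-; exact: Hv1.
have [v1 [v1F v1a pv1 bcv1]] : exists v1, [/\ v1 \in F, v1 != a, p v1 = a & fconnect p b v1].
  have ba : b != a by rewrite eq_sym; case/andP: adjab.
  move: b bF ba; apply: (measure_ind (m := rk)) => x IH xF xa.
  case: (eqVneq (p x) a) => [pa|pa].
    by exists x; split=> //; apply: connect0.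
  have [v1 [v1F v1a pv1 cv]] := IH (p x) (rk_step _ xF xa) (pF _ xF) pa.
  exists v1; split=> //; apply: connect_trans cv; exact: fconnect1.
pose D := [set x in F | fconnect p x v1].
have aD : a \notin D.
  by rewrite inE aF /=; apply/negP => /fc_a e; rewrite e eqxx in v1a.
have bD : b \in D by rewrite inE bF bcv1.
have v1D : v1 \in D by rewrite inE v1F connect0.
have Dp x : x \in D -> x != v1 -> p x \in D.
  rewrite !inE => /andP[xF cx] xv; rewrite pF //=.
  by move: cx; rewrite fconnect_eqVf (negbTE xv).
have pD x : x \in F -> p x \in D -> x \in D.
  rewrite !inE => xF /andP[_ cx]; rewrite xF /=.
  apply: connect_trans cx; exact: fconnect1.
have Da x : x \in D -> x != a by move=> xD; apply: contraNneq aD => <-.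
have bv1 : b != v1.
  apply/eqP => e; move: abT; rewrite e Tadj_sym => /negP; apply.
  by rewrite -[X in Tadj _ _ X]pv1; exact: (Tadj_p p v1F v1a).
have rkbv1 : rk v1 < rk b.
  have := fc_inv _ _ bF bcv1; case=> _ [e|//]; by rewrite e eqxx in bv1.
pose l := [arg max_(x > b in D) rk x].
have [lD lmax] : l \in D /\ forall x, x \in D -> rk x <= rk l.
  rewrite /l; case: arg_maxnP => // i iD imax; split=> // x xD; exact: imax.
have lF : l \in F by move: lD; rewrite inE => /andP[].
have la : l != a := Da l lD.
have lv1 : l != v1.
  apply/eqP => e; have := lmax b bD; rewrite e leqNgt rkbv1 //.
have Tl y : y \in F -> Tadj T l y -> y = p l.
  move=> yF; case/(Tadj_tree Hv) => [[_ [_ ->]]//|[_ [ya e]]].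
  have yD : y \in D by apply: pD => //; rewrite -e.
  have := lmax y yD; rewrite e leqNgt rk_step //.
have cl : c l = false.
  apply: (c_false l lF); apply: leq_trans (_ : #|[set p l]| <= 2); last by rewrite cards1.
  apply: subset_leq_card; apply/subsetP => y; rewrite !inE => /andP[yF Tly].
  by rewrite (Tl y yF Tly).
have Tv1a : Tadj T v1 a by rewrite -[X in Tadj _ _ X]pv1; exact: (Tadj_p p v1F v1a).
have cv1 : c v1 = true.
  have := cP v1 a v1F aF Tv1a; rewrite ca; by case: (c v1).
pose T1 := [set a; b] |: (T :\ [set v1; a]).
have T1ab : Tadj T1 a b by rewrite /Tadj !inE eqxx.
have T1T x y : Tadj T x y -> [set x; y] != [set v1; a] -> Tadj T1 x y.
  by rewrite /Tadj => Txy ne; rewrite !inE ne Txy orbT.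
have T1inv x y : Tadj T1 x y -> ([set x; y] = [set a; b]) \/ (Tadj T x y /\ [set x; y] != [set v1; a]).
  rewrite /Tadj !inE => /orP[/eqP e|/andP[ne Txy]]; first by left.
  by right.
have nev x : x != v1 -> x != a -> [set x; p x] != [set v1; a].
  move=> xv xa; apply/eqP => e; case: (pair_eqS e v1a) => [[e1 _]|[e1 _]].
    by rewrite e1 eqxx in xv.
  by rewrite e1 eqxx in xa.
have Tp x : x \in F -> x != a -> Tadj T x (p x) by move=> xF xa; exact: (Tadj_p p xF xa).
have L1 x : x \in D -> connect (Tadj T1) x v1.
  move: x; apply: (measure_ind (m := rk)) => x IH xD.
  case: (eqVneq x v1) => [->|xv]; first exact: connect0.
  have xF : x \in F by move: xD; rewrite inE => /andP[].
  apply: connect_trans (connect1 (T1T _ _ (Tp x xF (Da x xD)) (nev x xv (Da x xD)))) _.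
  by apply: IH; [apply: rk_step => //; apply: Da| apply: Dp].
have L2 x : x \in F -> x \notin D -> connect (Tadj T1) x a.
  move: x; apply: (measure_ind (m := rk)) => x IH xF xD.
  case: (eqVneq x a) => [->|xa]; first exact: connect0.
  have xv : x != v1 by apply: contraNneq xD => ->.
  apply: connect_trans (connect1 (T1T _ _ (Tp x xF xa) (nev x xv xa))) _.
  apply: IH; [exact: rk_step| exact: pF|].
  by apply: contra xD; apply: pD.
have Csym := sym_connect_sym (@Tadj_sym V T1).
have Lall x : x \in F -> connect (Tadj T1) x a.
  move=> xF; case: (boolP (x \in D)) => xD; last exact: L2.
  apply: connect_trans (L1 x xD) _.
  have vb : connect (Tadj T1) v1 b by rewrite Csym; exact: L1.
  apply: connect_trans vb _; apply: connect1; by rewrite Tadj_sym.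
have HT1 : spanning_tree F T1.
  split.
  - move=> A; rewrite !inE => /orP[/eqP ->|/andP[_ AT]].
      by exists a, b; split.
    by case: HT => h _ _; apply: h.
  - by move=> f g fF gF; apply: connect_trans (Lall f fF) _; rewrite Csym Lall.
  - case: HT => _ _ <-.
    rewrite cardsU1 !inE negb_and negbK orbC.
    have -> : ([set a; b] \in T) = false by apply/negbTE.
    rewrite /= (cardsD1 [set v1; a] T).
    by have -> : [set v1; a] \in T by [].
exists T1; split=> //.
case=> c1 [c1P c1W].
have c1_false x : x \in F -> #|[set y in F | Tadj T1 x y]| <= 2 -> c1 x = false.
  move=> xF h; apply/negP => cx; by move: h; rewrite c1W.
have c1v1 : c1 v1 = false.
  apply: (c1_false v1 v1F).
  have : [set y in F | Tadj T1 v1 y] \subset nbrs F v1 :\ a.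
    apply/subsetP => y; rewrite !inE => /andP[yF /T1inv [e|[Tvy ne]]].
      have : v1 \in [set a; b] by rewrite -e !inE eqxx.
      rewrite !inE (negbTE v1a) /= => /eqP e1; by rewrite e1 eqxx in bv1.
    have [_ _ _ adj] := Tarc _ _ Tvy; rewrite yF adj !andbT.
    by apply/eqP => ya; move: ne; rewrite ya eqxx.
  move/subset_leq_card; move/leq_trans; apply.
  have [_ _ _ adjv] := Tarc _ _ Tv1a.
  have := nbrs_le3 HF3 Hdeg v1F; rewrite (cardsD1 a (nbrs F v1)) !inE aF adjv /=.
  by rewrite add1n ltnS.
have c1l : c1 l = false.
  apply: (c1_false l lF); apply: leq_trans (_ : #|[set p l; a]| <= 2); last by rewrite cards2; case: (_ != _).
  apply: subset_leq_card; apply/subsetP => y; rewrite !inE => /andP[yF /T1inv [e|[Tly _]]].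
    have : l \in [set a; b] by rewrite -e !inE eqxx.
    rewrite !inE (negbTE la) /= => /eqP lb.
    have : y \in [set a; b] by rewrite -e !inE eqxx orbT.
    rewrite !inE => /orP[->|/eqP yb]; first by rewrite orbT.
    have : a \in [set l; y] by rewrite e !inE eqxx.
    rewrite lb -yb !inE orbb => /eqP ab.
    by move: adjab; rewrite /adjM ab eqxx orbT.
  by rewrite (Tl y yF Tly) eqxx.
have par x : x \in D -> c1 x (+) c x = c1 v1 (+) c v1.
  move: x; apply: (measure_ind (m := rk)) => x IH xD.
  case: (eqVneq x v1) => [->//|xv].
  have xF : x \in F by move: xD; rewrite inE => /andP[].
  have xa := Da x xD.
  have h1 := cP x (p x) xF (pF x xF) (Tp x xF xa).
  have h2 := c1P x (p x) xF (pF x xF) (T1T _ _ (Tp x xF xa) (nev x xv xa)).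
  rewrite -(IH (p x)) ?rk_step //; last exact: Dp.
  by move: h1 h2; case: (c x); case: (c (p x)); case: (c1 x); case: (c1 (p x)).
have := par l lD; by rewrite c1l cl c1v1 cv1.
Qed.
End Exch.


Lemma dcount (X Y : finType) (A : {set X}) (B : {set Y}) (R : X -> Y -> bool) :
  \sum_(x in A) #|[set y in B | R x y]| = \sum_(y in B) #|[set x in A | R x y]|.
Proof.
transitivity (\sum_(x in A) \sum_(y | (y \in B) && R x y) 1).
  apply: eq_bigr => x _; rewrite -sum1_card; apply: eq_bigl => y; by rewrite inE.
rewrite (exchange_big_dep (fun y => y \in B)) /=; last by move=> x y _ /andP[].
apply: eq_bigr => y yB; rewrite -sum1_card; apply: eq_bigl => x; by rewrite inE yB.
Qed.

Lemma grow_card (V : finType) (F X : {set {set V}}) (R : rel {set V}) x0 :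
  (forall f, f \in F -> #|f| = 3) -> X \subset F -> x0 \in X ->
  (forall y, y \in X -> connect R x0 y) ->
  (forall a b, a \in X -> R a b -> b \in X) ->
  (forall a b, R a b -> #|a :&: b| = 2) ->
  #|\bigcup_(f in X) f| <= #|X| + 2.
Proof.
move=> HF3 XF x0X conn clos R2.
apply: (grow (P := fun S => #|\bigcup_(f in S) f| <= #|S| + 2) x0X conn clos).
  by rewrite big_set1 cards1 HF3 //; apply: (subsetP XF).
move=> S a b SX x0S aS bX bS Rab IH.
rewrite big_setU1 //= cardsU1 bS /=.
have bF : b \in F by apply: (subsetP XF).
have := cardsUI b (\bigcup_(f in S) f); rewrite (HF3 b bF).
have : #|b :&: a| <= #|b :&: \bigcup_(f in S) f|.
  apply: subset_leq_card; apply: setIS; exact: bigcup_sup.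
rewrite setIC R2 //.
move=> h1 h2; rewrite add1n addSn; move: h1 h2 IH.
move: (#|b :|: _|) (#|b :&: _|) (#|\bigcup_(f in S) f|) => x y z; move=> h1 h2 h3; have hx : x <= z.+1 by lia.
apply: (leq_trans hx); rewrite ltnS; exact: h3.
Qed.

Section Euler.
Variable V : finType.
Variable F : {set {set V}}.
Hypothesis HF3 : forall f, f \in F -> #|f| = 3.
Hypothesis Hdeg : forall e : {set V}, #|e| = 2 -> facet_deg F e <= 2.
Hypothesis Hlink : forall v x y, x \in link_verts F v -> y \in link_verts F v ->
          connect (link_rel F v) x y.
Hypothesis Hsc : sc_connected F.
Hypothesis Hne : F != set0.
Variable T0 : {set {set {set V}}}.
Hypothesis HT0 : spanning_tree F T0.
Hypothesis Htree : forall f g, f \in F -> g \in F -> adjM F f g -> [set f; g] \in T0.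

Let E := edges F.
Let I := [set e in E | facet_deg F e == 2].

Lemma edgeP (e : {set V}) : e \in E -> #|e| = 2 /\ exists2 f, f \in F & e \subset f.
Proof.
rewrite inE => /andP[/eqP e2 /existsP[f /andP[fF ef]]]; split=> //; by exists f.
Qed.

Lemma edge_in (e f : {set V}) : #|e| = 2 -> f \in F -> e \subset f -> e \in E.
Proof. by move=> e2 fF ef; rewrite inE e2 eqxx /=; apply/existsP; exists f; rewrite fF. Qed.

Lemma fdeg_pos (e : {set V}) : e \in E -> 0 < facet_deg F e.
Proof.
case/edgeP=> _ [f fF ef]; rewrite /facet_deg card_gt0; apply/set0Pn; exists f.
by rewrite inE fF.
Qed.

Lemma card_I : #|I| = #|F| - 1.
Proof.
case: HT0 => HA _ <-.
pose phi (e : {set V}) := [set f in F | e \subset f].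
have phiI e : e \in I -> exists f g, [/\ f \in F, g \in F, f != g, adjM F f g &
    (e = f :&: g /\ phi e = [set f; g])].
  rewrite !inE => /andP[/andP[/eqP e2 _] /eqP d2].
  have /cards2P [f [g [nfg E1]]] : #|phi e| == 2 by apply/eqP.
  have : f \in phi e by rewrite E1 !inE eqxx.
  have : g \in phi e by rewrite E1 !inE eqxx orbT.
  rewrite !inE => /andP[gF eg] /andP[fF ef].
  have sub : e \subset f :&: g by rewrite subsetI ef eg.
  have le2 := inter_le2 HF3 fF gF nfg.
  have c2 : #|f :&: g| = 2.
    by apply/eqP; rewrite eqn_leq le2 -{1}e2 subset_leq_card.
  exists f, g; split=> //.
    by rewrite /adjM nfg c2.
  split=> //.
  by apply/eqP; rewrite eqEcard sub c2 e2 leqnn.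
have EQ : phi @: I = T0.
  apply/setP => A; apply/imsetP/idP.
  - case=> e eI ->; have [f [g [fF gF _ adj [_ ->]]]] := phiI e eI; exact: Htree.
  - move=> AT; have [f [g [fF gF adj AE]]] := HA A AT.
    have [nfg /eqP c2] := andP adj.
    have eE : f :&: g \in E by apply: (edge_in c2 fF); exact: subsetIl.
    have sub : [set f; g] \subset phi (f :&: g).
      by rewrite subUset !sub1set !inE fF gF subsetIl subsetIr.
    have Hd := Hdeg c2.
    have eq : phi (f :&: g) = [set f; g].
      apply/eqP; rewrite eq_sym eqEcard sub cards2 nfg; exact: Hd.
    exists (f :&: g); last by rewrite AE eq.
    rewrite inE eE /=; apply/eqP; rewrite /facet_deg -/(phi _) eq cards2 nfg; by [].
rewrite -EQ card_in_imset //.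
move=> e e' eI e'I Ephi.
  have [f [g [_ _ nfg _ [ee Pe]]]] := phiI e eI.
  have [f' [g' [_ _ nfg' _ [ee' Pe']]]] := phiI e' e'I.
  rewrite Ephi Pe' in Pe.
  rewrite ee ee'; by case: (pair_eqS Pe nfg) => [[-> ->]|[-> ->]]; rewrite // setIC.
Qed.

Lemma sum_fdeg : \sum_(e in E) facet_deg F e = 3 * #|F|.
Proof.
have := dcount F E (fun f e => e \subset f).
rewrite /facet_deg => <-.
rewrite (eq_bigr (fun _ => 3)); first by rewrite sum_nat_const mulnC.
move=> f fF.
have -> : [set e in E | e \subset f] = [set e : {set V} | e \subset f & #|e| == 2].
  apply/setP => e; rewrite [RHS]inE [LHS]inE; apply/idP/idP.
    by case/andP=> /edgeP[-> _] ->.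
  by case/andP=> ef /eqP e2; rewrite ef (edge_in e2 fF ef).
by rewrite cards_draws HF3.
Qed.

Lemma sum_split : \sum_(e in E) facet_deg F e = #|E| + #|I|.
Proof.
rewrite (eq_bigr (fun e => 1 + (facet_deg F e == 2))); last first.
  move=> e eE; have := fdeg_pos eE; have := Hdeg (edgeP eE).1.
  by case: (facet_deg F e) => [|[|[|n]]].
rewrite big_split /= sum1_card; congr (_ + _).
rewrite (eq_bigr (fun e => if facet_deg F e == 2 then 1 else 0)); last by move=> e _; case: (_ == _).
rewrite -big_mkcondr /= -sum1_card.
by apply: eq_bigl => e; rewrite /I [in RHS]inE.
Qed.

Lemma verts_le : #|verts F| <= #|F| + 2.
Proof.
have [f0 f0F] := set0Pn _ Hne.
apply: (grow_card (R := Dual F) HF3 (subxx F) f0F).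
- move=> y yF; exact: (dual_conn HF3 Hlink Hsc f0F yF).
- by move=> a b _ /and3P[].
- by move=> a b /and3P[_ _ /andP[_ /eqP]].
Qed.

Definition Fv v := [set f in F | v \in f].
Definition Ev v := [set e in E | v \in e].

Lemma edge_other (e : {set V}) v : #|e| = 2 -> v \in e -> exists2 x, x != v & e = [set v; x].
Proof.
move=> e2 ve.
have : #|e :\ v| == 1 by move: e2; rewrite (cardsD1 v e) ve add1n => -[->].
case/cards1P=> x ex.
have xe : x \in e :\ v by rewrite ex set11.
move: (xe); rewrite !inE => /andP[xv xe'].
exists x => //; apply/eqP; rewrite eq_sym eqEcard subUset !sub1set ve xe' e2 cards2.
by rewrite eq_sym xv.
Qed.

Lemma link_le v : v \in verts F -> #|Ev v| <= #|Fv v| + 1.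
Proof.
case/bigcupP=> f0 f0F vf0.
have sub : Fv v \subset F by apply/subsetP => f; rewrite inE => /andP[].
have f0v : f0 \in Fv v by rewrite inE f0F vf0.
have G : #|\bigcup_(f in Fv v) f| <= #|Fv v| + 2.
  apply: (grow_card (R := Rv F v) HF3 sub f0v).
  - move=> y; rewrite inE => /andP[yF vy]; exact: (star_conn HF3 Hlink f0F yF vf0 vy).
  - by move=> a b _ /andP[/and3P[_ bF _] vb]; rewrite inE bF vb.
  - by move=> a b /andP[/and3P[_ _ /andP[_ /eqP]]].
have vU : v \in \bigcup_(f in Fv v) f by apply/bigcupP; exists f0.
have : #|Ev v| <= #|(\bigcup_(f in Fv v) f) :\ v|.
  apply: leq_trans (leq_imset_card (fun x => [set v; x]) _).
  apply: subset_leq_card; apply/subsetP => e; rewrite inE => /andP[eE ve].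
  have [e2 [f fF ef]] := edgeP eE.
  have [x xv ee] := edge_other e2 ve.
  apply/imsetP; exists x => //; rewrite !inE xv /=.
  apply/bigcupP; exists f; first by rewrite /Fv inE fF (subsetP ef).
  by apply: (subsetP ef); rewrite ee !inE eqxx orbT.
move=> h; apply: leq_trans h _.
by move: G; rewrite (cardsD1 v (\bigcup_(f in Fv v) f)) vU add1n addn2 ltnS addn1.
Qed.

Lemma sumFv : \sum_(v in verts F) #|Fv v| = 3 * #|F|.
Proof.
rewrite /Fv (dcount (verts F) F (fun v f => v \in f)).
rewrite (eq_bigr (fun _ => 3)); first by rewrite sum_nat_const mulnC.
move=> f fF; rewrite -(HF3 fF); apply: eq_card => x; rewrite inE.
case xf: (x \in f); rewrite ?andbF ?andbT //.
exact: in_verts xf.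
Qed.

Lemma sumEv : \sum_(v in verts F) #|Ev v| = 2 * #|E|.
Proof.
rewrite /Ev (dcount (verts F) E (fun v e => v \in e)).
rewrite (eq_bigr (fun _ => 2)); first by rewrite sum_nat_const mulnC.
move=> e eE; have [e2 [f fF ef]] := edgeP eE; rewrite -e2; apply: eq_card => x; rewrite inE.
case xe: (x \in e); rewrite ?andbF ?andbT //.
exact: (in_verts fF (subsetP ef _ xe)).
Qed.

Lemma main_counts : [/\ #|verts F| = #|F| + 2, #|E| = 2 * #|F| + 1 &
  forall v, v \in verts F -> #|Ev v| = #|Fv v| + 1].
Proof.
have h3 : \sum_(v in verts F) #|Ev v| <= \sum_(v in verts F) (#|Fv v| + 1).
  by apply: leq_sum => v vV; apply: link_le.
have SE : \sum_(v in verts F) (#|Fv v| + 1) = 3 * #|F| + #|verts F|.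
  by rewrite big_split /= sum1_card sumFv.
rewrite SE sumEv in h3.
have [eV eE] : #|verts F| = #|F| + 2 /\ #|E| = 2 * #|F| + 1.
  have h1 := sum_fdeg; rewrite sum_split card_I in h1.
  have h2 := verts_le.
  have Fpos : 0 < #|F| by rewrite card_gt0.
  move: h1 h2 h3 Fpos.
  move: (#|verts F|) (#|F|) (#|E|) => nV nF nE h1 h2 h3 Fpos.
  split; lia.
split=> //.
have L := leqif_sum (P := fun v => v \in verts F) (fun v vV => leqif_eq (link_le vV)).
have EQ : \sum_(v in verts F) #|Ev v| = \sum_(v in verts F) (#|Fv v| + 1).
  rewrite SE sumEv eV eE.
  move: (#|F|) => nF; lia.
move: L => [_]; rewrite EQ eqxx => /esym/forall_inP H v vV.
exact/eqP/H.
Qed.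

Lemma inEv (e : {set V}) v : (e \in Ev v) = (e \in E) && (v \in e).
Proof. by rewrite /Ev !inE. Qed.

Lemma inFv (f : {set V}) v : (f \in Fv v) = (f \in F) && (v \in f).
Proof. by rewrite /Fv !inE. Qed.

Lemma bnd v : v \in verts F -> exists2 e, boundary_edge F e & v \in e.
Proof.
move=> vV.
case: (boolP [exists e in Ev v, facet_deg F e == 1]).
  case/exists_inP=> e; rewrite inEv => /andP[eE ve] d1.
  by exists e => //; rewrite /boundary_edge eE d1.
move/exists_inPn => H.
have [_ _ /(_ v vV) ek] := main_counts.
have := dcount (Ev v) (Fv v) (fun e f => e \subset f).
rewrite (eq_bigr (fun _ => 2)); last first.
  move=> e; rewrite inEv => /andP[eE ve].
  have := H e; rewrite inEv eE ve => /(_ isT).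
  have := fdeg_pos eE; have := Hdeg (edgeP eE).1.
  rewrite /facet_deg.
  have -> : [set f in Fv v | e \subset f] = [set f in F | e \subset f].
    apply/setP => f; rewrite inE [in RHS]inE inFv; case ef: (e \subset f); rewrite ?andbF ?andbT //.
    by rewrite (subsetP ef) ?andbT.
  by case: #|_| => [|[|[|n]]].
rewrite [RHS](eq_bigr (fun _ => 2)); last first.
  move=> f; rewrite inFv => /andP[fF vf].
  have -> : [set e in Ev v | e \subset f] = [set [set v; x] | x in f :\ v].
    apply/setP => e; apply/idP/imsetP.
      rewrite inE inEv => /andP[/andP[eE ve] ef].
      have [e2 _] := edgeP eE; have [x xv ee] := edge_other e2 ve.
      exists x; last by [].
      by rewrite !inE xv (subsetP ef) // ee !inE eqxx orbT.
    case=> x; rewrite !inE => /andP[xv xf] ->.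
    have e2 : #|[set v; x]| = 2 by rewrite cards2 eq_sym xv.
    have sub : [set v; x] \subset f by rewrite subUset !sub1set vf xf.
    rewrite in_set e2 eqxx sub !inE eqxx /= !andbT.
    by apply/existsP; exists f; rewrite fF sub.
  rewrite card_in_imset.
    by move: (HF3 fF); rewrite (cardsD1 v f) vf add1n => -[].
  move=> x y; rewrite !inE => /andP[xv _] /andP[yv _] E1.
  have : x \in [set v; y] by rewrite -E1 !inE eqxx orbT.
  by rewrite !inE (negbTE xv) => /eqP.
rewrite !sum_nat_const ek => /eqP; rewrite eqn_mul2r /=.
  move=> /eqP h; lia.
Qed.

Lemma polygon : simplicial_2manifold F -> polygon_triangulation F.
Proof.
move=> HM; have [eV eE _] := main_counts.
split=> //; first exact: bnd.
have -> : edges F = E by [].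
rewrite eV eE; move: (#|F|) => n; lia.
Qed.

End Euler.


Theorem mainTheorem8 (V : finType) (F : {set {set V}}) :
  simplicial_2manifold F -> sc_connected F ->
  ~ (polygon_triangulation F /\ checkered F (adjM F)) ->
  exists T : {set {set {set V}}},
    spanning_tree F T /\ ~ checkered F (unf_share T).
Proof.
move=> HM Hsc Hnot.
have HM' := HM; case: HM' => Hne HF3 Hdeg Hlink.
have [r rF] := set0Pn _ Hne.
have [p [rk Hv]] : exists p rk, valid (Dual F) r p rk F.
  apply: (@build V F (Dual F) r rF).
  - move=> y yF; exact: (dual_conn HF3 Hlink Hsc rF yF).
  - by move=> x y _ /and3P[].
  - exact: Dual_sym.
pose T0 := TreeOf F p r.
have HT0 : spanning_tree F T0 by apply: (tree_spanning Hv rF) => f g _ /and3P[].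
have conv T : spanning_tree F T -> ~ checkered F (Tadj T) -> ~ checkered F (unf_share T).
  move=> [HA _ _] nc c; apply: nc; exact/(unf_checkered Hdeg HA).
case: (classic (exists a b, [/\ a \in F, b \in F, adjM F a b & [set a; b] \notin T0])).
- case=> a [b [aF bF adj nT]].
  have [T [HT nc]] := exch_main HF3 Hdeg HT0 aF bF adj nT.
  by exists T; split=> //; apply: conv.
- move=> Hno.
  have Htree : forall f g, f \in F -> g \in F -> adjM F f g -> [set f; g] \in T0.
    move=> f g fF gF adj; apply/negPn/negP => nT; apply: Hno; by exists f, g.
  case: (classic (checkered F (Tadj T0))) => [ch|nch]; last first.
    by exists T0; split=> //; apply: conv.
  exfalso; apply: Hnot; split.
  + exact: (polygon HF3 Hdeg Hlink Hsc Hne HT0 Htree HM).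
  + apply: checkered_ext ch => f g fF gF.
    apply/idP/idP.
    * by case: HT0 => HA _ _ /(arc_facts HA) [].
    * exact: Htree.
Qed.
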